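(* For any graph $G$ with $m\ge1$ edges and any integer $1\le k\le n$, $Q_k^+\ge\left(1-\frac1k\right)Q_{\mathrm{opt}}$.
   Context: $G=(V,E)$ is an undirected simple graph, $V=\{1,\dots,n\}$, $m=|E|\ge1$, adjacency matrix $A$, degrees $d_i$. For a partition $\mathcal{C}$ of $V$ into nonempty communities, its modularity is $Q(\mathcal{C})=\frac{1}{2m}\sum_{i,j}\left(A_{i,j}-\frac{d_id_j}{2m}\right)\delta_{i,j}$, the sum over all ordered pairs $(i,j)$ including $i=j$, where $\delta_{i,j}=1$ if $i,j$ lie in the same community and $0$ otherwise. $Q_k$ denotes the maximum modularity over partitions of $V$ into exactly $k$ nonempty communities, $Q_k^+=\max_{1\le i\le k}Q_i$, and $Q_{\mathrm{opt}}=Q_n^+$ is the maximum modularity over all partitions. *)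

(* Defs.v *)
From HB Require Import structures.
From mathcomp Require Import all_boot all_order all_algebra.
Set Implicit Arguments. Unset Strict Implicit. Unset Printing Implicit Defensive.
Import Order.TTheory GRing.Theory Num.Theory.
Local Open Scope ring_scope.

Section Modularity.
Variables (n : nat) (e : rel 'I_n).

Definition simple_graph : Prop := symmetric e /\ irreflexive e.

Definition adj (i j : 'I_n) : rat := (e i j)%:R.
Definition deg (i : 'I_n) : nat := #|[set j | e i j]|.
Definition nedges : nat :=
  #|[set p : 'I_n * 'I_n | e p.1 p.2 && (p.1 < p.2)%N]|.

Definition modularity (P : {set {set 'I_n}}) : rat :=
  let m2 : rat := 2 * (nedges)%:R in
  m2^-1 * \sum_(i : 'I_n) \sum_(j : 'I_n)
    (adj i j - (deg i)%:R * (deg j)%:R / m2) * (pblock P i == pblock P j)%:R.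

Definition trivial_partition : {set {set 'I_n}} := [set [set: 'I_n]].

(* The default value of the big max is the modularity of the one-block
   partition, which is itself among the indexed partitions whenever
   1 <= k and n >= 1, so the big max is exactly the maximum. *)
Definition Qplus (k : nat) : rat :=
  \big[Num.max/modularity trivial_partition]_(P : {set {set 'I_n}} |
      partition P [set: 'I_n] && (1 <= #|P| <= k)%N) modularity P.

Definition Qopt : rat := Qplus n.

End Modularity.

(* Main.v *)
Require Import Defs.
From HB Require Import structures.
From mathcomp Require Import all_boot all_order all_algebra.
Import Order.TTheory GRing.Theory Num.Theory.
Local Open Scope ring_scope.
From mathcomp Require Import ring.

Lemma le_big_max_in (I : finType) (P : pred I) (F : I -> rat) x0 i :
  P i -> F i <= \big[Num.max/x0]_(j | P j) F j.
Proof.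
move=> Pi; have : i \in index_enum I by rewrite mem_index_enum.
elim: (index_enum I) => // a r IH; rewrite inE big_cons.
case/orP=> [/eqP <-|/IH H]; first by rewrite Pi le_max lexx.
by case: (P a) => //; rewrite le_max H orbT.
Qed.

Lemma big_max_ub (I : finType) (P : pred I) (F : I -> rat) x0 (y c : rat) :
  c * x0 <= y -> (forall i, P i -> c * F i <= y) ->
  c * \big[Num.max/x0]_(j | P j) F j <= y.
Proof.
move=> H0 H; elim/big_rec: _ => // a x Pa Hx.
by rewrite maxEle; case: ifP => _ //; exact: H.
Qed.

Lemma deg_nat n (e : rel 'I_n) i : deg e i = (\sum_j (e i j : nat))%N.
Proof.
rewrite /deg -sum1_card big_mkcond; apply: eq_bigr => j _.
by rewrite inE; case: (e i j).
Qed.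

Lemma nedges_nat n (e : rel 'I_n) :
  nedges e = (\sum_i \sum_j (e i j && (i < j)%N : nat))%N.
Proof.
rewrite /nedges -sum1_card big_mkcond pair_big /=; apply: eq_bigr => p _.
by rewrite inE; case: (e p.1 p.2 && _).
Qed.

Lemma deg_sum n (e : rel 'I_n) : simple_graph e ->
  (\sum_i deg e i = 2 * nedges e)%N.
Proof.
case=> sym irr.
have split : forall i j, (e i j : nat) = ((e i j && (i < j)%N) + (e i j && (j < i)%N))%N.
  move=> i j; case E: (e i j) => //=.
  have : i != j by apply: contraTneq E => ->; rewrite irr.
  by rewrite neq_ltn; case: ltngtP.
under eq_bigr do rewrite deg_nat.
under eq_bigr do under eq_bigr do rewrite split.
under eq_bigr do rewrite big_split /=.
rewrite big_split /= nedges_nat mul2n -addnn; congr (_ + _)%N.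
rewrite exchange_big; apply: eq_bigr => i _; apply: eq_bigr => j _.
by rewrite sym.
Qed.

Lemma preim_pblock (n : nat) (T : finType) (h : 'I_n -> T) (i j : 'I_n) :
  (pblock (preim_partition h setT) i == pblock (preim_partition h setT) j) = (h i == h j).
Proof.
have /and3P [/eqP cov tiP _] := preim_partitionP h [set: 'I_n].
rewrite eq_pblock //; last by rewrite cov inE.
by rewrite (pblock_equivalence_partition (R := fun x y => h x == h y)) ?inE //; split=> // /eqP ->.
Qed.

Lemma preim_card (n : nat) (T : finType) (h : 'I_n -> T) :
  (#|preim_partition h setT| <= #|T|)%N.
Proof.
have -> : preim_partition h setT = [set (fun a => [set y in [set: 'I_n] | a == h y]) x | x in [set h x | x in [set: 'I_n]]].
  by rewrite -imset_comp.
exact: leq_trans (leq_imset_card _ _) (max_card _).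
Qed.

Lemma preim_card_gt0 (n : nat) (T : finType) (h : 'I_n -> T) (i0 : 'I_n) :
  (0 < #|preim_partition h setT|)%N.
Proof.
rewrite card_gt0; apply/set0Pn; exists [set y in [set: 'I_n] | h i0 == h y].
by apply/imsetP; exists i0.
Qed.

Lemma count_eq (T : finType) (k : nat) (x y : T) : x != y ->
  \sum_(g : {ffun T -> 'I_k.+1}) ((g x == g y)%:R : rat)
   = #|{ffun T -> 'I_k.+1}|%:R / k.+1%:R.
Proof.
move=> xy.
pose phi (t : 'I_k.+1) (g : {ffun T -> 'I_k.+1}) :=
  [ffun z => if z == y then g z + t else g z].
have phi_inj t : injective (phi t).
  move=> g1 g2 /ffunP H; apply/ffunP => z; have := H z; rewrite !ffunE.
  by case: ifP => // _ /addIr.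
set S := \sum_g _.
have HS t : S = \sum_(g : {ffun T -> 'I_k.+1}) ((g x == g y + t)%:R : rat).
  rewrite /S (reindex_inj (phi_inj t)); apply: eq_bigr => g _.
  by rewrite !ffunE eqxx (negbTE xy).
have : k.+1%:R * S = #|{ffun T -> 'I_k.+1}|%:R.
  rewrite -[k.+1 in LHS]card_ord mulr_natl -sumr_const.
  have -> : \sum_(i in 'I_k.+1) S = \sum_(t : 'I_k.+1) \sum_(g : {ffun T -> 'I_k.+1}) ((g x == g y + t)%:R : rat).
    by apply: eq_bigr => t _; exact: HS.
  rewrite exchange_big -sum1_card natr_sum; apply: eq_bigr => g _.
  rewrite (bigD1 (g x - g y)) //=.
  have -> : g y + (g x - g y) = g x by rewrite addrC subrK.
  rewrite eqxx big1 ?addr0 // => t ht.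
  rewrite (_ : (g x == g y + t) = false) //; apply/negbTE; apply: contra ht => /eqP ->.
  by rewrite [g y + t]addrC addrK.
by move=> <-; rewrite [_ * S]mulrC mulfK // pnatr_eq0.
Qed.

Lemma Bsum n (e : rel 'I_n) : simple_graph e -> (1 <= nedges e)%N ->
  \sum_i \sum_j (adj e i j - (deg e i)%:R * (deg e j)%:R / (2 * (nedges e)%:R))
  = 0 :> rat.
Proof.
move=> sg m1.
have m20 : (2 * (nedges e)%:R : rat) != 0.
  by rewrite -natrM pnatr_eq0 muln_eq0 negb_or /= -lt0n.
have Dsum : \sum_j ((deg e j)%:R : rat) = 2 * (nedges e)%:R.
  by rewrite -natr_sum deg_sum // natrM.
apply: big1 => i _; rewrite sumrB.
have -> : \sum_j adj e i j = (deg e i)%:R.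
  by rewrite deg_nat natr_sum.
rewrite (eq_bigr (fun j => (deg e i)%:R * (deg e j)%:R * (2 * (nedges e)%:R)^-1)) //.
by rewrite -mulr_suml -mulr_sumr Dsum mulfK // subrr.
Qed.

Theorem lemma1 (n : nat) (e : rel 'I_n) (k : nat) :
  simple_graph e -> (1 <= nedges e)%N -> (1 <= k <= n)%N ->
  (1 - k%:R^-1) * Qopt e <= Qplus e k.
Proof.
move=> sg m1 /andP[k1 kn].
have n0 : (0 < n)%N by apply: leq_trans kn.
pose i0 : 'I_n := Ordinal n0.
case: k k1 kn => [//|k'] _ kn.
set c := 1 - k'.+1%:R^-1.
set m2 : rat := 2 * (nedges e)%:R.
have main : forall P, partition P [set: 'I_n] -> c * modularity e P <= Qplus e k'.+1.
  move=> P partP.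
  pose Q (g : {ffun {set 'I_n} -> 'I_k'.+1}) :=
    modularity e (preim_partition (fun i => g (pblock P i)) setT).
  pose Bf i j := adj e i j - (deg e i)%:R * (deg e j)%:R / m2.
  have HQ g : Q g = m2^-1 * \sum_i \sum_j Bf i j * (g (pblock P i) == g (pblock P j))%:R.
    rewrite /Q /modularity /=; congr (_ * _); apply: eq_bigr => i _.
    by apply: eq_bigr => j _; rewrite preim_pblock.
  have HP : modularity e P = m2^-1 * \sum_i \sum_j Bf i j * (pblock P i == pblock P j)%:R by [].
  set N := #|{ffun {set 'I_n} -> 'I_k'.+1}|.
  have ck : c + k'.+1%:R^-1 = 1 by rewrite /c subrK.
  have Hcount i j : \sum_(g : {ffun {set 'I_n} -> 'I_k'.+1}) ((g (pblock P i) == g (pblock P j))%:R : rat)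
      = N%:R * (c * (pblock P i == pblock P j)%:R + k'.+1%:R^-1).
    case: (eqVneq (pblock P i) (pblock P j)) => [->|ne].
      rewrite mulr1 ck mulr1 /N -sum1_card natr_sum.
      by apply: eq_bigr => g _; rewrite ?eqxx.
    by rewrite count_eq // mulr0 add0r.
  have Hsum : \sum_g Q g = N%:R * (c * modularity e P).
    under eq_bigr do rewrite HQ.
    rewrite -mulr_sumr exchange_big.
    under eq_bigr do rewrite exchange_big.
    under eq_bigr do under eq_bigr do rewrite -mulr_sumr Hcount.
    have E i j : Bf i j * (N%:R * (c * (pblock P i == pblock P j)%:R + k'.+1%:R^-1))
       = N%:R * c * (Bf i j * (pblock P i == pblock P j)%:R) + N%:R * k'.+1%:R^-1 * Bf i j.
      by ring.
    under eq_bigr do under eq_bigr do rewrite E.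
    under eq_bigr do rewrite big_split /=.
    rewrite big_split /=.
    have -> : \sum_i \sum_j N%:R * k'.+1%:R^-1 * Bf i j = 0.
      rewrite (eq_bigr (fun i => N%:R * k'.+1%:R^-1 * \sum_j Bf i j)); last by move=> i _; rewrite mulr_sumr.
      by rewrite -mulr_sumr Bsum // mulr0.
    rewrite addr0 HP.
    under eq_bigr do rewrite -mulr_sumr.
    by rewrite -mulr_sumr; ring.
  have [g Hg] : exists g, c * modularity e P <= Q g.
    case: (boolP [exists g, c * modularity e P <= Q g]) => [/existsP//|/existsPn H].
    have : \sum_g Q g < \sum_(g : {ffun {set 'I_n} -> 'I_k'.+1}) (c * modularity e P).
      apply: ltr_sum; first by apply/hasP; exists [ffun=> ord0]; rewrite ?mem_index_enum.
      by move=> g _; rewrite ltNge H.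
    have -> : \sum_(g : {ffun {set 'I_n} -> 'I_k'.+1}) (c * modularity e P) = N%:R * (c * modularity e P).
      by rewrite /N -sum1_card natr_sum mulr_suml; apply: eq_bigr => g _; rewrite mul1r.
    by rewrite Hsum ltxx.
  apply: le_trans Hg _.
  apply: (@le_big_max_in _ (fun P => partition P [set: 'I_n] && (1 <= #|P| <= k'.+1)%N)
          (modularity e)).
  rewrite preim_partitionP /= preim_card_gt0 //=.
  by have := @preim_card n _ (fun i => g (pblock P i)); rewrite card_ord.
apply: big_max_ub; last by move=> P /andP[pP _]; exact: main.
apply: main; rewrite /partition /trivial_partition cover1 trivIset1 eqxx /=.
rewrite in_set1 eq_sym; apply/set0Pn; exists i0; by rewrite inE.
Qed.
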